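(* Let $\sigma>0$ and $a\in(0,1/3)$. There exists $\varepsilon_0=\varepsilon_0(a,\sigma)>0$ such that for every $\varepsilon\in(0,\varepsilon_0)$ the following holds. Let $(a_n)_{n\ge0},(b_n)_{n\ge0},(c_n)_{n\ge0}$ be sequences of nonnegative real numbers with $a_0,b_0>0$, $c_0=0$, satisfying for all $n\ge0$ $$a_{n+1}\le\varepsilon^a(a_n+c_n)+\varepsilon b_n,\qquad b_{n+1}\le\varepsilon^a(b_n+c_n)+\varepsilon^{1/3}a_n,\qquad c_{n+1}\le\varepsilon^a\big(c_n+\sigma(a_n+b_n)\big).$$ Then for all $n\ge0$, $$a_n\le2\big(\varepsilon^{an/2}a_0+\varepsilon^{1/3+a(n-1)/2}b_0+\sqrt{\sigma}\,\varepsilon^{an/2}(a_0+b_0)\big),$$ $$b_n\le2\big(\varepsilon^{an/2}b_0+\varepsilon^{1/3+a(n-1)/2}a_0+\sqrt{\sigma}\,\varepsilon^{an/2}(a_0+b_0)\big),$$ $$c_n\le2\sqrt{\sigma}\,\varepsilon^{an/2}(a_0+b_0).$$ *)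

(* Defs.v *)
From Stdlib Require Import Reals.
Open Scope R_scope.

(* Main.v *)
Require Import Defs.
From Stdlib Require Import Reals.
From Stdlib Require Import Lra Lia Psatz.
Open Scope R_scope.

Lemma Rpower_pos' x y : 0 < Rpower x y.
Proof. unfold Rpower; apply exp_pos. Qed.

Lemma small_pow (t p eps0 eps : R) : 0 < t -> 0 < p -> 0 < eps0 <= Rpower t (/ p) ->
  0 < eps < eps0 -> Rpower eps p <= t.
Proof.
  intros Ht Hp [H0 H1] [H2 H3].
  apply Rle_trans with (Rpower eps0 p).
  { apply Rle_Rpower_l; lra. }
  apply Rle_trans with (Rpower (Rpower t (/p)) p).
  { apply Rle_Rpower_l; try lra. }
  rewrite Rpower_mult, Rinv_l by lra. rewrite Rpower_1; lra.
Qed.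

Lemma coefs (q r u sg t : R) : 0 < q <= t -> 0 < r <= t -> 0 < u <= t -> 0 < sg ->
  t <= 1/6 -> t * (1 + 2*sg + 2*sg*sg) <= 1 -> t <= sg/2 ->
  0 <= 1 + sg - q - 2*q*sg - r*u*r - r*u*sg /\
  0 <= r + sg - q*r - 2*q*sg - r*u - r*u*sg /\
  0 <= sg - q*r - 2*q*sg - r*sg /\
  0 <= 1 + sg - q - 2*q*sg - r*r - r*sg /\
  0 <= 1 - q - q*sg*(1 + r + 2*sg).
Proof.
  intros Hq Hr Hu Hs H1 H2 H3.
  assert (qs : q*sg <= t*sg) by nra.
  assert (rs : r*sg <= t*sg) by nra.
  assert (ru : r*u <= t*t) by nra.
  assert (qr : q*r <= t*t) by nra.
  assert (rr : r*r <= t*t) by nra.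
  assert (tt : t*t <= t/6) by nra.
  assert (rus : r*u*sg <= t*t*sg) by nra.
  assert (ttsx : t*t*sg <= t*sg/6) by nra.
  assert (rur : r*u*r <= t*t) by nra.
  assert (qsr : q*sg*r <= t*sg*t) by (apply Rmult_le_compat; nra).
  assert (qss : q*sg*sg <= t*sg*sg) by nra.
  repeat split; nra.
Qed.

Theorem lemma8p5 (sigma a : R) (hsigma : 0 < sigma) (ha : 0 < a < 1/3) :
  exists eps0 : R, 0 < eps0 /\
  forall eps : R, 0 < eps < eps0 ->
  forall A B C : nat -> R,
    (forall n, 0 <= A n /\ 0 <= B n /\ 0 <= C n) ->
    0 < A 0%nat -> 0 < B 0%nat -> C 0%nat = 0 ->
    (forall n, A (S n) <= Rpower eps a * (A n + C n) + eps * B n) ->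
    (forall n, B (S n) <= Rpower eps a * (B n + C n) + Rpower eps (1/3) * A n) ->
    (forall n, C (S n) <= Rpower eps a * (C n + sigma * (A n + B n))) ->
    forall n : nat,
      A n <= 2 * (Rpower eps (a * INR n / 2) * A 0%nat
                  + Rpower eps (1/3 + a * (INR n - 1) / 2) * B 0%nat
                  + sqrt sigma * Rpower eps (a * INR n / 2) * (A 0%nat + B 0%nat)) /\
      B n <= 2 * (Rpower eps (a * INR n / 2) * B 0%nat
                  + Rpower eps (1/3 + a * (INR n - 1) / 2) * A 0%nat
                  + sqrt sigma * Rpower eps (a * INR n / 2) * (A 0%nat + B 0%nat)) /\
      C n <= 2 * sqrt sigma * Rpower eps (a * INR n / 2) * (A 0%nat + B 0%nat).
Proof.
  set (sg := sqrt sigma).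
  assert (Hs : 0 < sg) by (apply sqrt_lt_R0; lra).
  assert (Hss : sg * sg = sigma) by (apply sqrt_sqrt; lra).
  set (t := Rmin (1/6) (Rmin (/ (1 + 2*sg + 2*sg*sg)) (sg/2))).
  assert (Ht1 : t <= 1/6) by apply Rmin_l.
  assert (Ht2 : t <= / (1 + 2*sg + 2*sg*sg))
    by (eapply Rle_trans; [apply Rmin_r | apply Rmin_l]).
  assert (Ht3 : t <= sg/2)
    by (eapply Rle_trans; [apply Rmin_r | apply Rmin_r]).
  assert (Hd : 0 < 1 + 2*sg + 2*sg*sg) by nra.
  assert (Ht0 : 0 < t).
  { unfold t. apply Rmin_glb_lt; [lra|]. apply Rmin_glb_lt; [|lra].
    apply Rinv_0_lt_compat; lra. }
  assert (Ht2' : t * (1 + 2*sg + 2*sg*sg) <= 1).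
  { apply Rmult_le_compat_r with (r := 1 + 2*sg + 2*sg*sg) in Ht2; [|lra].
    rewrite Rinv_l in Ht2; lra. }
  set (p1 := a/2). set (p2 := 1/3 - a/2). set (p3 := 2/3).
  assert (Hp1 : 0 < p1) by (unfold p1; lra).
  assert (Hp2 : 0 < p2) by (unfold p2; lra).
  assert (Hp3 : 0 < p3) by (unfold p3; lra).
  set (eps0 := Rmin (Rpower t (/p1)) (Rmin (Rpower t (/p2)) (Rpower t (/p3)))).
  assert (E0 : 0 < eps0).
  { unfold eps0; repeat apply Rmin_glb_lt; apply Rpower_pos'. }
  exists eps0; split; [exact E0|].
  intros eps Heps A B C Hnn HA0 HB0 HC0 RA RB RC.
  set (q := Rpower eps p1). set (r := Rpower eps p2). set (u := Rpower eps p3).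
  assert (Hq : 0 < q <= t).
  { split; [apply Rpower_pos'|]. apply (small_pow t p1 eps0); auto.
    split; [lra|apply Rmin_l]. }
  assert (Hr : 0 < r <= t).
  { split; [apply Rpower_pos'|]. apply (small_pow t p2 eps0); auto.
    split; [lra|]. eapply Rle_trans; [apply Rmin_r | apply Rmin_l]. }
  assert (Hu : 0 < u <= t).
  { split; [apply Rpower_pos'|]. apply (small_pow t p3 eps0); auto.
    split; [lra|]. eapply Rle_trans; [apply Rmin_r | apply Rmin_r]. }
  destruct (coefs q r u sg t Hq Hr Hu Hs Ht1 Ht2' Ht3) as (K1 & K2 & K3 & K4 & K5).
  assert (Ea : Rpower eps a = q * q).
  { unfold q; rewrite <- Rpower_plus; f_equal; unfold p1; lra. }
  assert (Ee : eps = q * r * u).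
  { unfold q, r, u; rewrite <- !Rpower_plus.
    replace (p1 + p2 + p3) with 1 by (unfold p1, p2, p3; lra).
    rewrite Rpower_1; lra. }
  assert (E13 : Rpower eps (1/3) = q * r).
  { unfold q, r; rewrite <- Rpower_plus; f_equal; unfold p1, p2; lra. }
  rewrite Ea in RA, RB, RC. rewrite E13 in RB. assert (RA2 : forall n, A (S n) <= q*q*(A n + C n) + q*r*u * B n) by (intro n; rewrite <- Ee; apply RA).
  set (A0 := A 0%nat). set (B0 := B 0%nat).
  set (P := A0 + r * B0 + sg * (A0 + B0)).
  set (Q := B0 + r * A0 + sg * (A0 + B0)).
  set (R' := sg * (A0 + B0)).
  assert (KA : q * (P + R') + r * u * Q <= P).
  { unfold P, Q, R'.
    assert (0 <= A0 * (1 + sg - q - 2*q*sg - r*u*r - r*u*sg)) by (apply Rmult_le_pos; unfold A0; lra).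
    assert (0 <= B0 * (r + sg - q*r - 2*q*sg - r*u - r*u*sg)) by (apply Rmult_le_pos; unfold B0; lra).
    nra. }
  assert (KB : q * (Q + R') + r * P <= Q).
  { unfold P, Q, R'.
    assert (0 <= A0 * (sg - q*r - 2*q*sg - r*sg)) by (apply Rmult_le_pos; unfold A0; lra).
    assert (0 <= B0 * (1 + sg - q - 2*q*sg - r*r - r*sg)) by (apply Rmult_le_pos; unfold B0; lra).
    nra. }
  assert (KC : q * (R' + sigma * (P + Q)) <= R').
  { unfold P, Q, R'. rewrite <- Hss.
    assert (0 <= (A0 + B0) * sg * (1 - q - q*sg*(1 + r + 2*sg))).
    { apply Rmult_le_pos; [|lra]. apply Rmult_le_pos; unfold A0, B0; lra. }
    nra. }
  assert (Main : forall n, A n <= 2 * Rpower eps (a * INR n / 2) * P /\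
                           B n <= 2 * Rpower eps (a * INR n / 2) * Q /\
                           C n <= 2 * Rpower eps (a * INR n / 2) * R').
  { induction n as [|n IH].
    - simpl. replace (a * 0 / 2) with 0 by lra. rewrite Rpower_O by lra.
      rewrite HC0. unfold P, Q, R'; fold A0 B0.
      assert (0 <= r * B0) by (apply Rmult_le_pos; unfold B0; lra).
      assert (0 <= r * A0) by (apply Rmult_le_pos; unfold A0; lra).
      assert (0 <= sg * (A0 + B0)) by (apply Rmult_le_pos; unfold A0, B0; lra).
      unfold A0, B0 in *; lra.
    - destruct IH as (IA & IB & IC).
      set (Qn := Rpower eps (a * INR n / 2)) in *.
      assert (HQn : 0 < Qn) by apply Rpower_pos'.
      assert (ES : Rpower eps (a * INR (S n) / 2) = Qn * q).
      { rewrite S_INR. unfold Qn, q; rewrite <- Rpower_plus; f_equal; unfold p1; lra. }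
      rewrite ES.
      destruct (Hnn n) as (An & Bn & Cn).
      assert (Hq2 : 0 <= q*q) by nra.
      assert (Hqru : 0 <= q*r*u) by (apply Rmult_le_pos; [|lra]; nra).
      assert (Hqr : 0 <= q*r) by nra.
      repeat split.
      + eapply Rle_trans; [apply RA2|].
        assert (q*q*(A n + C n) <= q*q*(2*Qn*P + 2*Qn*R')) by (apply Rmult_le_compat_l; lra).
        assert (q*r*u*B n <= q*r*u*(2*Qn*Q)) by (apply Rmult_le_compat_l; lra).
        assert (2*Qn*q*(q * (P + R') + r * u * Q) <= 2*Qn*q*P) by (apply Rmult_le_compat_l; nra).
        nra.
      + eapply Rle_trans; [apply RB|].
        assert (q*q*(B n + C n) <= q*q*(2*Qn*Q + 2*Qn*R')) by (apply Rmult_le_compat_l; lra).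
        assert (q*r*A n <= q*r*(2*Qn*P)) by (apply Rmult_le_compat_l; lra).
        assert (2*Qn*q*(q * (Q + R') + r * P) <= 2*Qn*q*Q) by (apply Rmult_le_compat_l; nra).
        nra.
      + eapply Rle_trans; [apply RC|].
        assert (q*q*(C n + sigma*(A n + B n)) <= q*q*(2*Qn*R' + sigma*(2*Qn*P + 2*Qn*Q))).
        { apply Rmult_le_compat_l; [lra|].
          assert (sigma*(A n + B n) <= sigma*(2*Qn*P + 2*Qn*Q)) by (apply Rmult_le_compat_l; lra).
          lra. }
        assert (2*Qn*q*(q * (R' + sigma * (P + Q))) <= 2*Qn*q*R') by (apply Rmult_le_compat_l; nra).
        nra. }
  intro n. destruct (Main n) as (IA & IB & IC).
  assert (Er : Rpower eps (1/3 + a * (INR n - 1) / 2) = r * Rpower eps (a * INR n / 2)).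
  { unfold r; rewrite <- Rpower_plus; f_equal; unfold p2; lra. }
  rewrite Er. fold A0 B0. unfold P, Q, R' in *.
  repeat split; nra.
Qed.
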